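(* An idempotent unital commutative semiring is fully elementary if and only if it is Frobenius.
   Context: A semiring $(X,+,0,\cdot)$: $(X,+,0)$ commutative monoid, $(X,\cdot)$ semigroup, distributivity, $0$ absorbing. Unital: has a multiplicative unit; idempotent: $x+x=x$ for all $x$. $X$ is Frobenius if $(x+y)^n=x^n+y^n$ for all $x,y\in X$ and all integers $n\ge1$. Polynomials in $n$ variables are functions $X^n\to X$ represented by formal expressions $\sum_{k} a_k\prod_{j=1}^n x_j^{d_{k,j}}$ ($a_k\in X$). A polynomial is symmetric if represented by an expression which, with each monomial $a_k\prod_j x_j^{d_{k,j}}$, contains all monomials $a_k\prod_j x_{\sigma(j)}^{d_{k,j}}$, $\sigma\in S_n$. $e_j$ is the sum of all products of $j$ distinct variables among $x_1,\dots,x_n$. $X$ is $n$-elementary if every symmetric polynomial $p$ in $n$ variables equals $r(e_1,\dots,e_n)$ (as functions on $X^n$) for some polynomial $r$; fully elementary if $n$-elementary for all $n\in\mathbb{N}$. *)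

(* Defs.v *)
From HB Require Import structures.
From mathcomp Require Import all_boot all_order all_algebra all_fingroup.
Set Implicit Arguments. Unset Strict Implicit. Unset Printing Implicit Defensive.
Import GRing.Theory.
Local Open Scope ring_scope.

(* Semirings: MathComp's comPzSemiRingType is exactly a commutative unital
   semiring (commutative additive monoid, associative commutative
   multiplication with unit, distributivity, 0 absorbing). *)

Section Defs.
Variable X : comPzSemiRingType.

Definition idempotent_sr : Prop := forall x : X, x + x = x.

Definition frobenius : Prop :=
  forall (x y : X) (n : nat), (0 < n)%N -> (x + y) ^+ n = x ^+ n + y ^+ n.

(* A formal polynomial expression in n variables: a finite list of
   monomials (a_k, d_k), with coefficient a_k and exponent vector d_k. *)
Definition pexpr (n : nat) := seq (X * {ffun 'I_n -> nat}).

Definition peval (n : nat) (p : pexpr n) (x : 'I_n -> X) : X :=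
  \sum_(m <- p) (m.1 * \prod_(j < n) x j ^+ m.2 j).

(* The monomial a * prod_j x_(s j)^(d j) has exponent d (s^-1 i) at x_i. *)
Definition perm_mono (n : nat) (s : 'S_n) (m : X * {ffun 'I_n -> nat}) :
    X * {ffun 'I_n -> nat} :=
  (m.1, [ffun i => m.2 (s^-1%g i)]).

Definition sym_pexpr (n : nat) (p : pexpr n) : Prop :=
  forall m, m \in p -> forall s : 'S_n, perm_mono s m \in p.

(* Elementary symmetric polynomial e_j (j = 1..n, indexed by j.-1 : 'I_n). *)
Definition esym (n : nat) (x : 'I_n -> X) (j : nat) : X :=
  \sum_(S : {set 'I_n} | #|S| == j) \prod_(i in S) x i.

Definition elem_vec (n : nat) (x : 'I_n -> X) : 'I_n -> X :=
  fun j => esym x j.+1.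

Definition n_elementary (n : nat) : Prop :=
  forall p : pexpr n, sym_pexpr p ->
    exists r : pexpr n, forall x : 'I_n -> X,
      peval p x = peval r (elem_vec x).

Definition fully_elementary : Prop := forall n : nat, n_elementary n.

End Defs.

(* Main.v *)
From HB Require Import structures.
Require Import Defs.
From mathcomp Require Import all_boot all_order all_algebra all_fingroup.
From mathcomp Require Import ring.
Set Implicit Arguments. Unset Strict Implicit. Unset Printing Implicit Defensive.
Import GRing.Theory.
Local Open Scope ring_scope.

Section Ord.
Variable X : comPzSemiRingType.
Hypothesis idem : idempotent_sr X.
Definition le (a b : X) := a + b = b.
Local Notation "a <=: b" := (le a b) (at level 70).

Lemma le_refl a : a <=: a. Proof. exact: idem. Qed.
Lemma le_trans a b c : a <=: b -> b <=: c -> a <=: c.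
Proof. rewrite /le => hab hbc. by rewrite -hbc addrA hab. Qed.
Lemma le_anti a b : a <=: b -> b <=: a -> a = b.
Proof. rewrite /le => h1 h2. by rewrite -h2 addrC h1. Qed.
Lemma le_addl a b : a <=: a + b. Proof. by rewrite /le addrA idem. Qed.
Lemma le_addr a b : b <=: a + b. Proof. by rewrite addrC; apply le_addl. Qed.
Lemma le_add a b c : a <=: c -> b <=: c -> a + b <=: c.
Proof. rewrite /le => h1 h2. by rewrite -addrA h2 h1. Qed.
Lemma le0 a : 0 <=: a. Proof. by rewrite /le add0r. Qed.
Lemma le_mull a b c : a <=: b -> c * a <=: c * b.
Proof. rewrite /le => h. by rewrite -mulrDr h. Qed.
Lemma le_mulr a b c : a <=: b -> a * c <=: b * c.
Proof. rewrite /le => h. by rewrite -mulrDl h. Qed.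
Lemma le_mul a b c d : a <=: b -> c <=: d -> a * c <=: b * d.
Proof. move=> h1 h2; apply: (le_trans (le_mull a h2)); exact: le_mulr. Qed.
Lemma le_addD a b c d : a <=: b -> c <=: d -> a + c <=: b + d.
Proof.
move=> h1 h2; apply: le_add; [exact: le_trans h1 (le_addl _ _) | exact: le_trans h2 (le_addr _ _)].
Qed.
Lemma le_exp a b n : a <=: b -> a ^+ n <=: b ^+ n.
Proof.
move=> h; elim: n => [|n IH]; first by rewrite !expr0; exact: le_refl.
by rewrite !exprS; apply: le_mul.
Qed.
Lemma le_sum I (r : seq I) (P : pred I) (F : I -> X) c :
  (forall i, P i -> F i <=: c) -> \sum_(i <- r | P i) F i <=: c.
Proof.
move=> h; apply: (big_ind (fun y => y <=: c)). exact: le0. move=> x y hx hy. exact: (le_add hx hy). exact: h.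
Qed.
Lemma le_term (I : eqType) (r : seq I) (P : pred I) (F : I -> X) i :
  i \in r -> P i -> F i <=: \sum_(j <- r | P j) F j.
Proof.
elim: r => // x r IH; rewrite inE big_cons => /orP [/eqP -> | ir] Pi.
  by rewrite Pi; apply: le_addl.
case: ifP => _; last exact: IH.
exact: le_trans (IH ir Pi) (le_addr _ _).
Qed.
Lemma le_sum2 I (r : seq I) (P : pred I) (F G : I -> X) :
  (forall i, P i -> F i <=: G i) -> \sum_(i <- r | P i) F i <=: \sum_(i <- r | P i) G i.
Proof. move=> h; apply: (big_ind2 le); [exact: le_refl | move=> ? ? ? ? h1 h2; exact: (le_addD h1 h2) | exact: h]. Qed.
Lemma le_prod2 I (r : seq I) (P : pred I) (F G : I -> X) :
  (forall i, P i -> F i <=: G i) -> \prod_(i <- r | P i) F i <=: \prod_(i <- r | P i) G i.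
Proof. move=> h; apply: (big_ind2 le); [exact: le_refl | move=> ? ? ? ? h1 h2; exact: (le_mul h1 h2) | exact: h]. Qed.

Lemma le_combine (a b c R R1 R2 : X) : R1 = R -> R2 = R -> a <=: b + c ->
  a * R <=: b * R1 + c * R2.
Proof. by move=> -> -> h; rewrite -mulrDl; apply: le_mulr. Qed.

Lemma key_ineq (u v : X) (a b : nat) : frobenius X -> (b <= a)%N ->
  u ^+ a * v ^+ b.+1 <=: u ^+ a.+1 * v ^+ b + v ^+ a.+1 * u ^+ b.
Proof.
move=> fr hba; have [t ->] : exists t, a = (t + b)%N by exists (a - b)%N; rewrite subnK.
have e1 : u ^+ (t + b) * v ^+ b.+1 = (u ^+ t * v) * (u ^+ b * v ^+ b).
  by rewrite exprD exprSr; ring.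
have e2 : u ^+ (t + b).+1 * v ^+ b + v ^+ (t + b).+1 * u ^+ b
   = (u ^+ t.+1 + v ^+ t.+1) * (u ^+ b * v ^+ b).
  by rewrite -addSn !exprD; ring.
rewrite e1 e2; apply: le_mulr; rewrite -fr // exprSr.
by apply: le_mul; [apply: le_exp; apply: le_addl | apply: le_addr].
Qed.


Section Sym.
Variable n : nat.
Definition mono (d : 'I_n -> nat) (x : 'I_n -> X) := \prod_j x j ^+ d j.
Definition Orb (d : 'I_n -> nat) (x : 'I_n -> X) :=
  \sum_(s : 'S_n) mono d (fun j => x (s j)).

Lemma Orb_ext d1 d2 x : d1 =1 d2 -> Orb d1 x = Orb d2 x.
Proof. by move=> h; apply: eq_bigr => s _; apply: eq_bigr => j _; rewrite h. Qed.

Lemma Orb_perm d x (t : 'S_n) : Orb d (fun j => x (t j)) = Orb d x.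
Proof.
rewrite /Orb [RHS](reindex_inj (@mulIg _ t)) /=.
by apply: eq_bigr => s _; apply: eq_bigr => j _; rewrite permM.
Qed.

Lemma Orb_id d x : mono d x <=: Orb d x.
Proof.
have -> : mono d x = mono d (fun j => x ((1 : 'S_n)%g j)).
  by apply: eq_bigr => j _; rewrite perm1.
exact: (le_term (fun s : 'S_n => mono d (fun j => x (s j))) (mem_index_enum _)).
Qed.

Lemma mono_perm (s : 'S_n) (m : X * {ffun 'I_n -> nat}) x :
  mono (perm_mono s m).2 x = mono m.2 (fun j => x (s j)).
Proof.
rewrite /mono (reindex_inj (@perm_inj _ s)) /=.
by apply: eq_bigr => j _; rewrite ffunE permK.
Qed.

Definition tm (d : 'I_n -> nat) (y : 'I_n -> X) (T : {set 'I_n}) :=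
  \prod_l y l ^+ (d l + (l \in T))%N.

Lemma tm_split d y T : tm d y T = mono d y * \prod_(l in T) y l.
Proof.
rewrite /tm /mono [\prod_(l in T) _]big_mkcond -big_split /=.
by apply: eq_bigr => l _; rewrite exprD; case: (l \in T); rewrite ?expr1 ?expr0.
Qed.

Lemma split2 (F : 'I_n -> X) i j : i != j ->
  \prod_l F l = F i * F j * \prod_(l < n | (l != i) && (l != j)) F l.
Proof.
move=> ij; rewrite (bigD1 i) //= (bigD1 j) /=; last by rewrite eq_sym.
by rewrite mulrA.
Qed.



Section Step.
Hypothesis fr : frobenius X.
Variables (d' : 'I_n -> nat) (S0 : {set 'I_n}).
Hypothesis top : forall i j, i \in S0 -> j \notin S0 -> (d' j <= d' i)%N.
Definition dd l := (d' l + (l \in S0))%N.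

Lemma swap_step y (T : {set 'I_n}) i j : i \in S0 -> i \notin T -> j \in T -> j \notin S0 ->
  tm d' y T <=: tm d' y (i |: (T :\ j)) + tm d' (fun l => y (tperm i j l)) (i |: (T :\ j)).
Proof.
move=> iS iT jT jS.
have ij : i != j by apply: contraNneq jS => <-.
rewrite /tm !(split2 _ ij) /= tpermL tpermR.
have e1 : \prod_(l < n | (l != i) && (l != j)) y (tperm i j l) ^+ (d' l + (l \in i |: (T :\ j)))%N
  = \prod_(l < n | (l != i) && (l != j)) y l ^+ (d' l + (l \in T))%N.
  apply: eq_bigr => l /andP [li lj]; rewrite tpermD; last 2 first.
  - by rewrite eq_sym.
  - by rewrite eq_sym.
  by rewrite !inE (negbTE li) lj.
have e2 : \prod_(l < n | (l != i) && (l != j)) y l ^+ (d' l + (l \in i |: (T :\ j)))%N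
  = \prod_(l < n | (l != i) && (l != j)) y l ^+ (d' l + (l \in T))%N.
  by apply: eq_bigr => l /andP [li lj]; rewrite !inE (negbTE li) lj.
have m1 : (i \in i |: (T :\ j)) = true by rewrite !inE eqxx.
have m2 : (j \in i |: (T :\ j)) = false by rewrite !inE eqxx eq_sym (negbTE ij).
rewrite m1 m2 (negbTE iT) jT /= !addn0 !addn1.
apply: le_combine; [exact: e2 | exact: e1 | exact: key_ineq (top iS jS)].
Qed.

Lemma Qlem m : forall (T : {set 'I_n}) y, #|T| = #|S0| -> #|T :\: S0| = m -> tm d' y T <=: Orb dd y.
Proof.
elim: m => [|m IH] T y hc hm.
  have /eqP e : T :\: S0 == set0 by rewrite -cards_eq0 hm.
  move: e => /eqP; rewrite setD_eq0 => sub.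
  have /eqP -> : T == S0 by rewrite eqEcard sub hc leqnn.
  exact: Orb_id.
case: (set_0Vmem (T :\: S0)) => [e | [j]]; first by rewrite e cards0 in hm.
rewrite inE => /andP [jS jT].
case: (set_0Vmem (S0 :\: T)) => [e | [i]].
  move: e => /eqP; rewrite setD_eq0 => sub.
  have /eqP e : S0 == T by rewrite eqEcard sub hc leqnn.
  by move: jT; rewrite -e (negbTE jS).
rewrite inE => /andP [iT iS].
apply: le_trans (swap_step y iS iT jT jS) _.
have iS0 : i \in S0 := iS.
have hc2 : #|i |: (T :\ j)| = #|S0|.
  rewrite cardsU1 in_setD1 (negbTE iT) andbF -hc (cardsD1 j T) jT.
  by rewrite add1n.
have hm2 : #|(i |: (T :\ j)) :\: S0| = m.
  have -> : (i |: (T :\ j)) :\: S0 = (T :\: S0) :\ j.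
    apply/setP => l; rewrite !inE.
    case: (eqVneq l i) => [->|li] /=; first by rewrite iS0 /= andbF.
    by rewrite andbCA.
  move: hm; rewrite (cardsD1 j (T :\: S0)) !inE jS jT /= add1n.
  by case.
apply: le_add; first exact: IH.
by rewrite -(Orb_perm dd y (tperm i j)); apply: IH.
Qed.

Lemma step x : Orb dd x = Orb d' x * Defs.esym x #|S0|.
Proof.
apply: le_anti.
  rewrite /Orb big_distrl /=; apply: le_sum2 => s _.
  have -> : mono dd (fun j => x (s j)) = tm d' (fun j => x (s j)) S0 by [].
  rewrite tm_split; apply: le_mull.
  rewrite -(big_imset (fun i => x i)) /=; last by move=> ? ? _ _; apply: perm_inj.
  apply: (le_term (fun S : {set 'I_n} => \prod_(i in S) x i) (mem_index_enum _)).
  by rewrite card_imset //; apply: perm_inj.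
rewrite [Orb d' x]/Orb big_distrl /=; apply: le_sum => s _.
rewrite /Defs.esym big_distrr /=; apply: le_sum => T /eqP hT.
rewrite (reindex_inj (@perm_inj _ s)) /=.
have -> : \prod_(j | s j \in T) x (s j) = \prod_(j in s @^-1: T) x (s j).
  by apply: eq_bigl => j; rewrite inE.
rewrite -tm_split -(Orb_perm dd x s).
apply: (@Qlem _ (s @^-1: T) _ _ (erefl _)).
by rewrite card_preimset //; apply: perm_inj.
Qed.
End Step.



Section Main.
Hypothesis fr : frobenius X.

Lemma orb_zero (d : 'I_n -> nat) : (forall j, d j = 0%N) ->
  exists c : {ffun 'I_n -> nat}, forall x, Orb d x = \prod_(j < n) Defs.esym x j.+1 ^+ c j.
Proof.
move=> h0; exists [ffun => 0%N] => x.
rewrite [RHS]big1; last by move=> j _; rewrite ffunE expr0.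
have e : forall s : 'S_n, mono d (fun j => x (s j)) = 1.
  by move=> s; apply: big1 => j _; rewrite h0 expr0.
apply: le_anti.
  apply: le_sum => s _; rewrite e; exact: le_refl.
apply: le_trans (Orb_id d x).
have -> : mono d x = 1 by apply: big1 => j _; rewrite h0 expr0.
exact: le_refl.
Qed.

Lemma orb_elem N : forall (d : 'I_n -> nat), (\sum_j d j <= N)%N ->
  exists c : {ffun 'I_n -> nat}, forall x, Orb d x = \prod_(j < n) Defs.esym x j.+1 ^+ c j.
Proof.
elim: N => [|N IH] d hd.
  apply: orb_zero => j; apply/eqP; rewrite -leqn0; apply: leq_trans hd.
  by rewrite (bigD1 j) //= leq_addr.
pose S0 := [set i | (0 < d i)%N].
case: (set_0Vmem S0) => [e | [i0 i0S]].
  apply: orb_zero => j; apply/eqP; rewrite -leqn0 leqNgt.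
  by have := in_set0 j; rewrite -e inE => ->.
pose d' := fun l => (d l - (l \in S0))%N.
have hdd : forall l, d l = dd d' S0 l.
  move=> l; rewrite /dd /d'; case: (boolP (l \in S0)) => [|_]; last by rewrite subn0 addn0.
  by rewrite inE => h; rewrite subnK.
have top : forall i j, i \in S0 -> j \notin S0 -> (d' j <= d' i)%N.
  move=> i j _; rewrite inE -leqNgt leqn0 => /eqP h.
  by rewrite /d' h sub0n.
have hsum : (\sum_j d' j + #|S0| = \sum_j d j)%N.
  rewrite -sum1_card [\sum_(i in S0) 1]big_mkcond -big_split /=.
  by apply: eq_bigr => l _; rewrite hdd /dd; case: (l \in S0).
have k0 : (0 < #|S0|)%N by rewrite card_gt0; apply/set0Pn; exists i0.
have [c' hc'] : exists c : {ffun 'I_n -> nat}, forall x, Orb d' x = \prod_(j < n) Defs.esym x j.+1 ^+ c j.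
  apply: IH; rewrite -ltnS; apply: leq_trans hd.
  by rewrite -hsum -addn1 leq_add2l.
have kn : (#|S0|.-1 < n)%N.
  by rewrite prednK //; apply: leq_trans (max_card _) _; rewrite card_ord.
pose j0 := Ordinal kn.
exists [ffun l => c' l + (l == j0)]%N => x.
rewrite (Orb_ext x hdd) step // hc'.
have -> : \prod_(j < n) Defs.esym x j.+1 ^+ [ffun l => c' l + (l == j0)]%N j
  = \prod_(j < n) Defs.esym x j.+1 ^+ c' j * \prod_(j < n) Defs.esym x j.+1 ^+ (j == j0).
  by rewrite -big_split /=; apply: eq_bigr => l _; rewrite ffunE exprD.
congr (_ * _); rewrite (bigD1 j0) //= eqxx expr1 big1 ?mulr1 /=.
  by rewrite prednK.
by move=> l /negbTE ->; rewrite expr0.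
Qed.

Lemma sum_orb (p : pexpr X n) : sym_pexpr p ->
  forall x, peval p x = \sum_(m <- p) m.1 * Orb m.2 x.
Proof.
move=> hs x; apply: le_anti.
  apply: le_sum2 => m _; apply: le_mull; exact: Orb_id.
rewrite big_seq; apply: le_sum => m mp.
rewrite /Orb big_distrr /=; apply: le_sum => s _.
have -> : m.1 * mono m.2 (fun j => x (s j)) = (perm_mono s m).1 * mono (perm_mono s m).2 x.
  by rewrite mono_perm.
exact: (le_term (fun m : X * {ffun 'I_n -> nat} => m.1 * mono m.2 x) (hs m mp s)).
Qed.

Lemma build (q : seq (X * {ffun 'I_n -> nat})) :
  exists r : pexpr X n, forall x, \sum_(m <- q) m.1 * Orb m.2 x = peval r (elem_vec x).
Proof.
elim: q => [|m q [r hr]]; first by exists [::] => x; rewrite /peval !big_nil.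
have [c hc] := orb_elem (leqnn (\sum_j m.2 j)).
exists ((m.1, c) :: r) => x; rewrite /peval !big_cons hr hc.
by [].
Qed.

Lemma frob_elem : n_elementary X n.
Proof.
move=> p hp; have [r hr] := build p.
by exists r => x; rewrite sum_orb.
Qed.
End Main.
End Sym.
End Ord.

Definition o1 : 'I_2 := @Ordinal 2 1 erefl.
Lemma ord2 (i : 'I_2) : i = ord0 \/ i = o1.
Proof. case: i => [[|[|m]] hi]; [left|right|by []]; exact: val_inj. Qed.

Lemma peval_mono (X : comPzSemiRingType) (idem : idempotent_sr X) n (r : pexpr X n) a b :
  (forall j, le (a j) (b j)) -> le (peval r a) (peval r b).
Proof.
move=> h; apply: le_sum2 => // m _; apply: le_mull => //.
by apply: le_prod2 => // j _; apply: le_exp.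
Qed.

Lemma elem_frob (X : comPzSemiRingType) : idempotent_sr X -> n_elementary X 2 -> frobenius X.
Proof.
move=> idem hel u v k k0.
pose d0 : {ffun 'I_2 -> nat} := [ffun i => if i == ord0 then k else 0%N].
pose m0 : X * {ffun 'I_2 -> nat} := (1, d0).
pose p : pexpr X 2 := [seq perm_mono s m0 | s <- enum 'S_2].
have hp : sym_pexpr p.
  move=> m /mapP [s _ ->] t; apply/mapP; exists (s * t)%g; first by rewrite mem_enum.
  rewrite /perm_mono /=; congr (_, _); apply/ffunP => i; rewrite !ffunE invMg permM.
  by [].
have [r hr] := hel p hp.
have hmono : forall y : 'I_2 -> X, mono d0 y = y ord0 ^+ k.
  move=> y; rewrite /mono big_ord_recr big_ord1 /=.
  have -> : widen_ord (leqnSn 1) ord0 = ord0 :> 'I_2 by apply: val_inj.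
  have e : (ord_max == ord0 :> 'I_2) = false by [].
  by rewrite !ffunE eqxx e expr0 mulr1.
have hpe : forall y, peval p y = \sum_(s <- enum 'S_2) 1 * y (s ord0) ^+ k.
  move=> y; rewrite /peval big_map; apply: eq_bigr => s _.
  by rewrite -/(mono (perm_mono s m0).2 y) mono_perm hmono.
pose w := fun i : 'I_2 => if i == ord0 then u + v else 0.
pose z := fun i : 'I_2 => if i == ord0 then u else v.
have A : le ((u + v) ^+ k) (peval p w).
  rewrite hpe; have -> : (u + v) ^+ k = 1 * w ((1 : 'S_2)%g ord0) ^+ k by rewrite perm1 mul1r.
  by apply: (le_term idem (fun s : 'S_2 => 1 * w (s ord0) ^+ k)); rewrite ?mem_enum.
have B : le (peval p z) (u ^+ k + v ^+ k).
  rewrite hpe; apply: (le_sum) => s _; rewrite mul1r /z.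
  by case: (ord2 (s ord0)) => -> /=; [exact: (le_addl idem (u ^+ k) (v ^+ k)) | exact: (le_addr idem (u ^+ k) (v ^+ k))].
have C : le (peval r (elem_vec w)) (peval r (elem_vec z)).
  apply: peval_mono => // j; rewrite /elem_vec /Defs.esym.
  apply: (le_sum) => S /eqP hS.
  case: (boolP (o1 \in S)) => [h1|h1].
    by rewrite (bigD1 o1) //= /w /= mul0r; apply: le0.
  have [i0 i0S] : exists i0, i0 \in S.
    by apply/set0Pn; rewrite -card_gt0 hS.
  have e : S = [set ord0].
    apply/setP => l; rewrite inE; case: (ord2 l) => ->; last by rewrite (negbTE h1).
    case: (ord2 i0) i0S => -> hi; first by rewrite hi eqxx.
    by rewrite hi in h1.
  rewrite e big_set1 /w eqxx.
  have c1 : forall a : 'I_2, #|[set a]| == j.+1 by move=> a; rewrite -hS e !cards1.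
  apply: (le_add).
    have -> : u = \prod_(i in [set ord0]) z i by rewrite big_set1.
    exact: (le_term idem (fun S : {set 'I_2} => \prod_(i in S) z i) (mem_index_enum _) (c1 ord0)).
  have -> : v = \prod_(i in [set o1]) z i by rewrite big_set1.
  exact: (le_term idem (fun S : {set 'I_2} => \prod_(i in S) z i) (mem_index_enum _) (c1 o1)).
apply: (le_anti).
  apply: (le_trans A); rewrite hr; apply: (le_trans C); rewrite -hr; exact: B.
by apply: le_add; apply: (le_exp idem); [exact: (le_addl idem u v) | exact: (le_addr idem u v)].
Qed.

Theorem corollary4p7 (X : comPzSemiRingType) :
  idempotent_sr X -> (fully_elementary X <-> frobenius X).
Proof.
move=> idem; split; first by move=> h; apply: elem_frob => //; apply: h.
by move=> fr n; apply: frob_elem.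
Qed.
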